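(* Let $S,T$ be spin systems, $\beta>0$, and $\mathcal f:S\to T$ a simulation with cut-off $\Delta>\max(H_T)$, degeneracy $d$ and $m=|\mathrm{enc}|$ encodings. Then $$\|p_{\mathcal f,\beta}-p_{T,\beta}\|<\frac{1}{md}\,q_S^{|V_S|}\,e^{-\beta(\Delta-\min(H_T))}.$$
   Context: A spin system $S=(q_S,V_S,E_S,J_S)$: integer $q_S\ge2$, finite set $V_S$, hyperedges $E_S\subseteq\mathcal P(V_S)$ covering $V_S$, $J_S(e):[q_S]^e\to\mathbb R_{\ge0}$. $\mathcal C_S=[q_S]^{V_S}$, $H_S(\vec s)=\sum_eJ_S(e)(\vec s|_e)$, $Z_S(\beta)=\sum_{\vec s}e^{-\beta H_S(\vec s)}$, Boltzmann distribution $p_{S,\beta}(\vec s)=e^{-\beta H_S(\vec s)}/Z_S(\beta)$. Total variation distance $\|p-q\|=\frac12\sum_x|p(x)-q(x)|$. A simulation $\mathcal f:S\to T$ consists of a cut-off $\Delta>0$, shift $\Gamma\in\mathbb R$, degeneracy $d\in\mathbb N$, $P:V_T\to V_S^k$ (components $P^{(i)}$), $\mathrm{dec}:[q_S]^k\to[q_T]$, and $\mathrm{enc}=(\mathrm{enc}_i:[q_T]\to[q_S]^k)_{i=1,\dots,m}$, satisfying: (1) $P^{(i)}(v)=P^{(j)}(w)\Rightarrow i=j,\ v=w$; (2) $\mathrm{dec}\circ\mathrm{enc}_i=\mathrm{id}$; (3) $\mathrm{enc}_i(t)=\mathrm{enc}_j(t)$ for some $t$ implies $i=j$; (4) with $\mathrm{sim}_i(\vec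 t)=\{\vec s\in\mathcal C_S:\vec s\circ P=\mathrm{enc}_i\circ\vec t,\ H_S(\vec s)-\Gamma<\Delta\}$, $|\mathrm{sim}_i(\vec t)|=d$ whenever $H_T(\vec t)<\Delta$; (5) $H_S(\vec s)-\Gamma=H_T(\vec t)$ for $\vec s\in\bigcup_i\mathrm{sim}_i(\vec t)$, and $H_S(\vec s)-\Gamma\ge\Delta$ for every $\vec s$ in no $\mathrm{sim}_i(\vec t)$. Here $(\vec s\circ P)(v)=(\vec s(P^{(1)}(v)),\dots,\vec s(P^{(k)}(v)))$, $(\mathrm{enc}_i\circ\vec t)(v)=\mathrm{enc}_i(\vec t(v))$, and $\mathrm{dec}\circ\vec s\circ P\in\mathcal C_T$. The simulation distribution is the probability distribution on $\mathcal C_T$ given by $p_{\mathcal f,\beta}(\vec t)=\sum_{\vec s\in\mathcal C_S:\ \mathrm{dec}\circ\vec s\circ P=\vec t}p_{S,\beta}(\vec s)$. *)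

(* Defs.v *)
From HB Require Import structures.
From mathcomp Require Import all_boot all_order all_algebra.
From mathcomp Require Import reals sequences exp.
Set Implicit Arguments. Unset Strict Implicit. Unset Printing Implicit Defensive.
Import Order.TTheory GRing.Theory Num.Theory.
Local Open Scope ring_scope.

Section SpinSystems.
Variable R : realType.

(* A spin system (q, V, E, J).  The spin set [q] is 'I_q; a local
   configuration in [q]^e is a finite function on the subtype of e. *)
Record spin_system := SpinSystem {
  ss_q : nat;
  ss_V : finType;
  ss_E : {set {set ss_V}};
  ss_J : forall e : {set ss_V}, {ffun {x : ss_V | x \in e} -> 'I_ss_q} -> R
}.

Arguments ss_J : clear implicits.

Definition is_spin_system (S : spin_system) : Prop :=
  [/\ (2 <= ss_q S)%N,
      (\bigcup_(e in ss_E S) e) = [set: ss_V S] &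
      forall e, e \in ss_E S -> forall c, 0 <= ss_J S e c].

Definition config (S : spin_system) := {ffun ss_V S -> 'I_(ss_q S)}.

Definition restr (S : spin_system) (s : config S) (e : {set ss_V S})
  : {ffun {x : ss_V S | x \in e} -> 'I_(ss_q S)} :=
  [ffun x => s (val x)].

Definition ham (S : spin_system) (s : config S) : R :=
  \sum_(e in ss_E S) ss_J S e (restr s e).

Definition partfun (S : spin_system) (beta : R) : R :=
  \sum_(s : config S) expR (- (beta * ham s)).

Definition boltzmann (S : spin_system) (beta : R) (s : config S) : R :=
  expR (- (beta * ham s)) / partfun S beta.

Definition ham_max (S : spin_system) : R :=
  match [pick s : config S] with
  | Some s0 => \big[Num.max/ham s0]_(s : config S) ham s
  | None => 0
  end.

Definition ham_min (S : spin_system) : R :=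
  match [pick s : config S] with
  | Some s0 => \big[Num.min/ham s0]_(s : config S) ham s
  | None => 0
  end.

Definition tvdist (X : finType) (p q : X -> R) : R :=
  2^-1 * \sum_(x : X) `|p x - q x|.

(* Data of a simulation f : S -> T. P : V_T -> V_S^k is given by its
   components P v i = P^(i)(v); enc_i is sim_enc i. *)
Record simulation (S T : spin_system) := Simulation {
  sim_Delta : R;
  sim_Gamma : R;
  sim_d : nat;
  sim_k : nat;
  sim_P : ss_V T -> 'I_sim_k -> ss_V S;
  sim_dec : {ffun 'I_sim_k -> 'I_(ss_q S)} -> 'I_(ss_q T);
  sim_m : nat;
  sim_enc : 'I_sim_m -> 'I_(ss_q T) -> {ffun 'I_sim_k -> 'I_(ss_q S)}
}.


Arguments sim_Delta : clear implicits.
Arguments sim_Gamma : clear implicits.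
Arguments sim_d : clear implicits.
Arguments sim_k : clear implicits.
Arguments sim_P : clear implicits.
Arguments sim_dec : clear implicits.
Arguments sim_m : clear implicits.
Arguments sim_enc : clear implicits.
Arguments sim_Delta {S T}.
Arguments sim_Gamma {S T}.
Arguments sim_d {S T}.
Arguments sim_k {S T}.
Arguments sim_P {S T}.
Arguments sim_dec {S T}.
Arguments sim_m {S T}.
Arguments sim_enc {S T}.

Section SimDefs.
Variables (S T : spin_system) (f : simulation S T).

Definition compP (s : config S) (v : ss_V T) : {ffun 'I_(sim_k f) -> 'I_(ss_q S)} :=
  [ffun i => s (sim_P f v i)].

Definition decode (s : config S) : config T :=
  [ffun v => sim_dec f (compP s v)].

Definition simset (i : 'I_(sim_m f)) (t : config T) : {set config S} :=
  [set s : config S | [forall v, compP s v == sim_enc f i (t v)]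
                      && (ham s - sim_Gamma f < sim_Delta f)].

Definition is_simulation : Prop :=
  0 < sim_Delta f /\
  [/\
      (forall (i j : 'I_(sim_k f)) (v w : ss_V T),
          sim_P f v i = sim_P f w j -> i = j /\ v = w),
      (forall i t, sim_dec f (sim_enc f i t) = t),
      (forall i j t, sim_enc f i t = sim_enc f j t -> i = j),
      (forall i (t : config T), ham t < sim_Delta f -> #|simset i t| = sim_d f) &
      (forall (t : config T) i s, s \in simset i t -> ham s - sim_Gamma f = ham t)
      /\ (forall s : config S,
            (forall i (t : config T), s \notin simset i t) ->
            sim_Delta f <= ham s - sim_Gamma f)].

Definition simdist (beta : R) (t : config T) : R :=
  \sum_(s : config S | decode s == t) boltzmann beta s.

End SimDefs.
End SpinSystems.

(* Main.v *)
Require Import Defs.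
From HB Require Import structures.
From mathcomp Require Import all_boot all_order all_algebra.
From mathcomp Require Import reals sequences exp.
From mathcomp Require Import ring lra.
Import Order.TTheory GRing.Theory Num.Theory.
Local Open Scope ring_scope.

Lemma tv_abs (R : realType) (X : finType) (p wT B : X -> R) (c ZT ZB ZS : R) :
 0 < c -> (forall t, 0 < wT t) -> (forall t, 0 <= B t) ->
 ZT = \sum_t wT t -> 0 < ZT -> ZB = \sum_t B t -> ZS = c*ZT + ZB ->
 (forall t, p t = (c * wT t + B t) / ZS) ->
 tvdist p (fun t => wT t / ZT) <= ZB / ZS.
Proof.
move=> c0 w0 B0 eT ZT0 eB eS ep.
have ZB0 : 0 <= ZB by rewrite eB; apply: sumr_ge0 => t _.
have ZS0 : 0 < ZS by rewrite eS; apply: ltr_wpDr => //; apply: mulr_gt0.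
have key : forall t, `|p t - wT t / ZT| <= (B t * ZT + wT t * ZB) / (ZS * ZT).
  move=> t; rewrite ep.
  have -> : (c * wT t + B t) / ZS - wT t / ZT = (B t * ZT - wT t * ZB) / (ZS * ZT).
    have ZS1 : c * ZT + ZB != 0 by rewrite -eS gt_eqF.
    have ZT1 : ZT != 0 by rewrite gt_eqF.
    by rewrite eS; field; rewrite ZS1 ZT1.
  have hp : 0 <= (ZS * ZT)^-1 by rewrite invr_ge0 mulr_ge0 // ltW.
  rewrite normrM [X in _ * X]ger0_norm //.
  apply: ler_wpM2r; first by rewrite invr_ge0 mulr_ge0 ?ltW.
  apply: (le_trans (ler_normB _ _)).
  by rewrite !ger0_norm // mulr_ge0 // ltW.
rewrite /tvdist.
apply: le_trans (ler_wpM2l _ (ler_sum _ (fun t _ => key t))) _.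
  by rewrite invr_ge0.
rewrite -mulr_suml big_split /= -!mulr_suml -eB -eT.
rewrite le_eqVlt; apply/orP; left; apply/eqP.
field; apply/andP; split; rewrite gt_eqF //.
Qed.
Section X.
Variables (R : realType) (S T : spin_system R) (f : simulation S T).

Lemma simset_dec i t s : is_simulation f ->
  s \in @simset _ _ _ f i t -> decode f s = t.
Proof.
move=> [_ [_ h2 _ _ _]]; rewrite inE => /andP [/forallP H _]; apply/ffunP => v.
by rewrite ffunE (eqP (H v)) h2.
Qed.

Lemma ham_le_max (t : config T) : ham t <= ham_max T.
Proof.
rewrite /ham_max; case: pickP => [s0 _|/(_ t)//].
by rewrite (bigD1 t) //= le_max lexx.
Qed.

Lemma ham_min_ex (t0 : config T) : exists tm : config T, ham_min T = ham tm
  /\ forall t : config T, ham tm <= ham t.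
Proof.
rewrite /ham_min; case: pickP => [s0 _|/(_ t0)//].
have [tm etm] : exists tm : config T, \big[Num.min/ham s0]_(s : config T) ham s = ham tm.
  apply: (big_ind (fun x => exists tm : config T, x = ham tm)); first by exists s0.
    move=> x y [tx ->] [ty ->]; rewrite /Num.min; case: ifP => _; by eexists.
  by move=> s _; exists s.
exists tm; split => // t; rewrite -etm.
by rewrite (bigD1 t) //= ge_min lexx.
Qed.

Definition good (s : config S) :=
  [exists i : 'I_(sim_m f), s \in @simset _ _ _ f i (decode f s)].

Lemma card_good (v0 : ss_V T) (t : config T) : is_simulation f ->
  (forall t : config T, ham t < sim_Delta f) ->
  #|[set s | good s && (decode f s == t)]| = (sim_m f * sim_d f)%N.
Proof.
move=> hsim hlt; have hsim' := hsim; case: hsim' => _ [h1 h2 h3 h4 _].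
transitivity (\sum_(i : 'I_(sim_m f)) #|@simset _ _ _ f i t|); last first.
  by rewrite (eq_bigr _ (fun i _ => h4 i t (hlt t))) sum_nat_const card_ord.
rewrite -sum1_card big_mkcond /=.
under [RHS]eq_bigr => i _ do rewrite -sum1_card big_mkcond /=.
rewrite exchange_big /=; apply: eq_bigr => s _.
case: (boolP [exists i, s \in @simset _ _ _ f i t]).
  case/existsP => i0 Hi0.
  have ed := @simset_dec i0 t s hsim Hi0.
  have -> : s \in [set s | good s && (decode f s == t)].
    by rewrite inE ed eqxx andbT; apply/existsP; exists i0; rewrite ed.
  rewrite (bigD1 i0) //= Hi0 big1 // => j ne; case: ifP => // Hj; exfalso.
  move: Hi0 Hj; rewrite !inE => /andP[/forallP/(_ v0)/eqP e1 _] /andP[/forallP/(_ v0)/eqP e2 _].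
  by move/eqP: ne; apply; apply: (h3 _ _ (t v0)); rewrite -e1 -e2.
move=> hn; rewrite big1; last by move=> i _; case: ifP => // Hi; case/existsP: hn; exists i.
case: ifP => //; rewrite inE => /andP [/existsP [i Hi] /eqP ed].
by case/existsP: hn; exists i; rewrite -ed.
Qed.
End X.

Theorem mainTheorem14 (R : realType) (S T : spin_system R)
    (f : simulation S T) (beta : R) :
  is_spin_system S -> is_spin_system T ->
  0 < beta -> is_simulation f ->
  (0 < sim_m f)%N -> (0 < sim_d f)%N ->
  ham_max T < sim_Delta f ->
  tvdist (simdist f beta) (boltzmann beta (S := T)) <
    ((sim_m f)%:R * (sim_d f)%:R)^-1 * ((ss_q S)%:R ^+ #|ss_V S|)
    * expR (- (beta * (sim_Delta f - ham_min T))).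
Proof.
move=> hS hT b0 hsim m0 d0 hmax.
have hsim' := hsim; case: hsim' => D0 [h1 h2 h3 h4 [h5a h5b]].
have hlt : forall t : config T, ham t < sim_Delta f.
  by move=> t; apply: le_lt_trans (@ham_le_max _ _ t) hmax.
have qT0 : (0 < ss_q T)%N by case: hT => hq _ _; apply: leq_trans hq.
have qS0 : (0 < ss_q S)%N by case: hS => hq _ _; apply: leq_trans hq.
pose t0 : config T := [ffun _ => Ordinal qT0].
have RHS0 : 0 < ((sim_m f)%:R * (sim_d f)%:R)^-1 * ((ss_q S)%:R ^+ #|ss_V S|)
    * expR (- (beta * (sim_Delta f - ham_min T))).
  rewrite mulr_gt0 ?expR_gt0 // mulr_gt0 // ?invr_gt0 ?mulr_gt0 ?ltr0n //.
  by rewrite exprn_gt0 // ltr0n.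
pose WS := fun s : config S => expR (- (beta * ham s)).
pose WT := fun t : config T => expR (- (beta * ham t)).
have ZS0 : 0 < partfun S beta.
  rewrite /partfun (bigD1 [ffun _ => Ordinal qS0]) //=.
  by apply: ltr_pwDl; [apply: expR_gt0 | apply: sumr_ge0 => s _; apply: expR_ge0].
case: (pickP (fun _ : ss_V T => true)) => [v0 _ | hnone]; last first.
  have alleq : forall t1 t2 : config T, t1 = t2.
    by move=> t1 t2; apply/ffunP => v; have := hnone v.
  apply: (le_lt_trans _ RHS0); rewrite /tvdist big1 ?mulr0 // => t _.
  have -> : simdist f beta t = 1.
    rewrite /simdist (eq_bigl xpredT); last by move=> s; rewrite (alleq (decode f s) t) eqxx.
    rewrite /boltzmann -mulr_suml divff //; exact: (lt0r_neq0 ZS0).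
  have -> : boltzmann beta t = 1.
    rewrite /boltzmann /partfun (bigD1 t) //= big1 ?addr0 ?divff ?gt_eqF ?expR_gt0 //.
    by move=> t' /eqP []; apply: alleq.
  by rewrite subrr normr0.

pose g := fun s : config S => @good _ _ _ f s.
pose c := ((sim_m f * sim_d f)%N)%:R * expR (- (beta * sim_Gamma f)).
pose Bt := fun t : config T => \sum_(s | ~~ g s && (decode f s == t)) WS s.
pose ZB := \sum_(s | ~~ g s) WS s.
have c0 : 0 < c by rewrite mulr_gt0 ?expR_gt0 // ltr0n muln_gt0 m0 d0.
have hgood : forall t, \sum_(s | g s && (decode f s == t)) WS s = c * WT t.
  move=> t.
  rewrite (eq_bigr (fun _ => expR (- (beta * sim_Gamma f)) * WT t)); last first.
    move=> s /andP [/existsP [i Hi] /eqP ed].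
    have := h5a _ _ _ Hi; rewrite ed => eh.
    rewrite /WS /WT -expRD; congr expR.
    have -> : ham s = ham t + sim_Gamma f by rewrite -eh; ring.
    ring.
  rewrite (eq_bigl (fun s => s \in [set s | g s && (decode f s == t)])); last first.
    by move=> s; rewrite inE.
  rewrite sumr_const (@card_good _ _ _ f v0 t hsim hlt) /c -mulr_natl; ring.
have hsum : forall t, \sum_(s | decode f s == t) WS s = c * WT t + Bt t.
  move=> t; rewrite (bigID g) /= -hgood; congr (_ + _); apply: eq_bigl => s; by rewrite andbC.
have hsimd : forall t, simdist f beta t = (c * WT t + Bt t) / partfun S beta.
  by move=> t; rewrite /simdist /boltzmann -mulr_suml hsum.
have eZB : ZB = \sum_t Bt t by rewrite /ZB (partition_big (decode f) xpredT).
have eZS : partfun S beta = c * partfun T beta + ZB.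
  rewrite /partfun (partition_big (decode f) xpredT) //=.
  rewrite (eq_bigr (fun t => c * WT t + Bt t)); last by move=> t _; rewrite -hsum.
  by rewrite big_split /= -mulr_sumr eZB.
have [tm [etm tmin]] := @ham_min_ex _ _ t0.
have ZTge : WT tm <= partfun T beta.
  rewrite /partfun (bigD1 tm) //= lerDl; apply: sumr_ge0 => t _; apply: expR_ge0.
have ZT0 : 0 < partfun T beta by apply: lt_le_trans ZTge; apply: expR_gt0.
apply: (le_lt_trans (@tv_abs R _ (simdist f beta) WT Bt c (partfun T beta) ZB (partfun S beta)
   c0 (fun t => expR_gt0 _) (fun t => sumr_ge0 _ (fun s _ => expR_ge0 _)) erefl ZT0 eZB eZS hsimd)).
have ZB0 : 0 <= ZB by apply: sumr_ge0 => s _; apply: expR_ge0.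
pose K := expR (- (beta * (sim_Gamma f + sim_Delta f))).
pose nb := #|[set s | ~~ g s]|.
have ZBle : ZB <= nb%:R * K.
  rewrite /ZB (eq_bigl (fun s => s \in [set s | ~~ g s])); last by move=> s; rewrite inE.
  rewrite mulr_natl -sumr_const; apply: ler_sum => s; rewrite inE => hs.
  have hb : forall (i : 'I_(sim_m f)) (t : config T), s \notin simset i t.
    move=> i t; apply/negP => Hi; move/negP: hs; apply; apply/existsP; exists i.
    by rewrite (@simset_dec _ _ _ f i t s hsim Hi).
  have := h5b s hb => hD.
  rewrite /WS /K ler_expR lerN2; apply: ler_wpM2l; [exact: ltW | lra].
have ZSge : c * WT tm <= partfun S beta.
  rewrite eZS; apply: (le_trans (ler_wpM2l (ltW c0) ZTge)); rewrite lerDl //.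
have WT0 : 0 < WT tm by apply: expR_gt0.
have step1 : ZB / partfun S beta <= nb%:R * K / (c * WT tm).
  apply: ler_pM => //; first by rewrite invr_ge0 ltW.
  by rewrite lef_pV2 ?posrE // mulr_gt0.
have hnb : nb%:R < (ss_q S)%:R ^+ #|ss_V S| :> R.
  rewrite -natrX ltr_nat.
  have <- : #|config S| = (ss_q S ^ #|ss_V S|)%N by rewrite card_ffun card_ord.
  rewrite /nb -cardsT; apply: proper_card; rewrite properT; apply/eqP => E.
  have [s1 Hs1] : exists s1, s1 \in @simset _ _ _ f (Ordinal m0) t0.
    by apply/card_gt0P; rewrite h4.
  have : s1 \in [set s | ~~ g s] by rewrite E inE.
  rewrite inE => /negP; apply; apply/existsP; exists (Ordinal m0).
  by rewrite (@simset_dec _ _ _ f _ _ s1 hsim Hs1).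
pose Y := ((sim_m f)%:R * (sim_d f)%:R)^-1 * expR (- (beta * (sim_Delta f - ham_min T))).
have Y0 : 0 < Y by rewrite mulr_gt0 ?expR_gt0 // invr_gt0 mulr_gt0 // ltr0n.
have eq1 : nb%:R * K / (c * WT tm) = nb%:R * Y.
  have eK : K = expR (- (beta * sim_Gamma f)) * WT tm * expR (- (beta * (sim_Delta f - ham_min T))).
    by rewrite /K /WT etm -!expRD; congr expR; ring.
  have m1 : (sim_m f)%:R != 0 :> R by rewrite pnatr_eq0 -lt0n.
  have d1 : (sim_d f)%:R != 0 :> R by rewrite pnatr_eq0 -lt0n.
  have e1 : expR (- (beta * sim_Gamma f)) != 0 by rewrite gt_eqF ?expR_gt0.
  have w1 : WT tm != 0 by rewrite gt_eqF.
  rewrite eK /Y /c natrM; field.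
  by rewrite m1 d1 e1 w1.
apply: (le_lt_trans step1); rewrite eq1.
have -> : ((sim_m f)%:R * (sim_d f)%:R)^-1 * (ss_q S)%:R ^+ #|ss_V S| *
    expR (- (beta * (sim_Delta f - ham_min T))) = (ss_q S)%:R ^+ #|ss_V S| * Y.
  by rewrite /Y; ring.
by rewrite ltr_pM2r.
Qed.
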